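(* Let $\mu_e>0,\sigma^2>0$ and consider any modular federating method (defined in the context). Then: (1) For any coalition $C$ and any two players $s,l\in C$ with $n_s\le n_l$, the smaller player's error is at least the larger player's: $err_s(C)\ge err_l(C)$, strictly if $n_s<n_l$. (2) For any $c>0$, any coalition $C$ in which the largest player has at most $c\cdot\frac{\mu_e}{\sigma^2}$ samples satisfies $(2c+1)$-egalitarian fairness, i.e. $\frac{err_i(C)}{err_j(C)}\le 2c+1$ for all $i,j\in C$. (3) This bound is tight up to an additive $\epsilon$: for every $c>0$ and every $\epsilon>0$ there exist parameters $\mu_e,\sigma^2>0$ and sample sizes $n_s\ge1$, $n_l\le c\cdot\frac{\mu_e}{\sigma^2}$ such that $\frac{err_s(\{s,l\})}{err_l(\{s,l\})}\ge 2c+1-\epsilon$.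
   Context: Players $i$ each have a number of samples $n_i>0$. A federating method assigns to each coalition (set of players) $C$ and each player $j\in C$ an error $err_j(C)>0$, depending on the sample sizes of the players in $C$ and on parameters $\mu_e>0$ (average sampling noise) and $\sigma^2>0$ (variance of players' true parameters). For two players $s,l$ write $err_s(\{n_s,n_l\})$, $err_l(\{n_s,n_l\})$ for their errors in the two-player coalition $\{s,l\}$, viewed as functions of $n_s,n_l$. A federating method is modular if for every coalition $C$ and players $s,l\in C$ with $n_s\le n_l$: (P1) $\frac{err_s(C)}{err_l(C)}\ge1$, with $err_s(C)>err_l(C)$ if $n_s<n_l$; (P2) $\frac{err_s(C)}{err_l(C)}\le\frac{err_s(\{n_s,n_l\})}{err_l(\{n_s,n_l\})}$; (P3) $\frac{\partial}{\partial n_l}\frac{err_s(\{n_s,n_l\})}{err_l(\{n_s,n_l\})}\ge0$; (P4) $\frac{\partial}{\partial n_s}\frac{err_s(\{n_s,n_l\})}{err_l(\{n_s,n_l\})}\le0$; (P5) $\lim_{n_s/n_l\to0}\frac{err_s(\{n_s,n_l\})}{err_l(\{n_s,n_l\})}=\frac{\mu_e/n_l+2\sigma^2}{\mu_e/n_l}$. A coalition $C$ satisfies $\lambda$-egalitarian fairness ($\lambda\ge1$) if $err_i(C)/err_j(C)\le\lambda$ for all $i,j\in C$. *)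

(* Defs.v *)
From Stdlib Require Import Reals List.
From Coquelicot Require Import Coquelicot.
Open Scope R_scope.

(* A federating method: given mu_e, sigma^2, the list of sample sizes of the
   players of a coalition C (player j of C has sample size nth j ns 0), and the
   index j of a player in C, returns err_j(C). *)
Definition method := R -> R -> list R -> nat -> R.

Definition size_of (ns : list R) (i : nat) : R := nth i ns 0.

Definition pos_sizes (ns : list R) : Prop :=
  forall i, (i < length ns)%nat -> 0 < size_of ns i.

Definition federating_method (err : method) : Prop :=
  forall mu sig2 ns j, 0 < mu -> 0 < sig2 -> pos_sizes ns ->
    (j < length ns)%nat -> 0 < err mu sig2 ns j.

(* err_s({n_s,n_l}) / err_l({n_s,n_l}) as a function of n_s = x, n_l = y *)
Definition pair_ratio (err : method) (mu sig2 x y : R) : R :=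
  err mu sig2 (x :: y :: nil) 0%nat / err mu sig2 (x :: y :: nil) 1%nat.

Definition modular_P1 (err : method) (mu sig2 : R) : Prop :=
  forall ns s l, pos_sizes ns -> (s < length ns)%nat -> (l < length ns)%nat ->
    size_of ns s <= size_of ns l ->
    err mu sig2 ns s / err mu sig2 ns l >= 1 /\
    (size_of ns s < size_of ns l -> err mu sig2 ns s > err mu sig2 ns l).

Definition modular_P2 (err : method) (mu sig2 : R) : Prop :=
  forall ns s l, pos_sizes ns -> (s < length ns)%nat -> (l < length ns)%nat ->
    size_of ns s <= size_of ns l ->
    err mu sig2 ns s / err mu sig2 ns l
      <= pair_ratio err mu sig2 (size_of ns s) (size_of ns l).

Definition modular_P3 (err : method) (mu sig2 : R) : Prop :=
  forall x y, 0 < x -> x <= y ->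
    ex_derive (fun t => pair_ratio err mu sig2 x t) y /\
    0 <= Derive (fun t => pair_ratio err mu sig2 x t) y.

Definition modular_P4 (err : method) (mu sig2 : R) : Prop :=
  forall x y, 0 < x -> x <= y ->
    ex_derive (fun t => pair_ratio err mu sig2 t y) x /\
    Derive (fun t => pair_ratio err mu sig2 t y) x <= 0.

(* P5: the limit as n_s/n_l -> 0, holding fixed the quantities the limit
   value is expressed in, namely mu_e/n_l (= a) and sigma^2. *)
Definition modular_P5 (err : method) : Prop :=
  forall a sig2, 0 < a -> 0 < sig2 ->
  forall eps, 0 < eps -> exists delta, 0 < delta /\
    forall ns nl, 0 < ns -> 0 < nl -> ns / nl < delta ->
      Rabs (pair_ratio err (a * nl) sig2 ns nl
            - ((a * nl) / nl + 2 * sig2) / ((a * nl) / nl)) < eps.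

Definition modular (err : method) : Prop :=
  (forall mu sig2, 0 < mu -> 0 < sig2 ->
     modular_P1 err mu sig2 /\ modular_P2 err mu sig2 /\
     modular_P3 err mu sig2 /\ modular_P4 err mu sig2) /\
  modular_P5 err.

Definition egalitarian_fair (err : method) (mu sig2 lam : R) (ns : list R) : Prop :=
  forall i j, (i < length ns)%nat -> (j < length ns)%nat ->
    err mu sig2 ns i / err mu sig2 ns j <= lam.

(* Main.v *)
Require Import Defs.
From Stdlib Require Import Reals List Lra.
From Coquelicot Require Import Coquelicot.
Open Scope R_scope.

Lemma mono_up (f : R -> R) a b : a <= b ->
  (forall t, a <= t <= b -> ex_derive f t /\ 0 <= Derive f t) -> f a <= f b.
Proof.
  intros Hab H.
  destruct (MVT_gen f a b (Derive f)) as [c [Hc E]].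
  - intros x Hx. rewrite Rmin_left in Hx by lra. rewrite Rmax_right in Hx by lra.
    apply Derive_correct. apply H; lra.
  - intros x Hx. rewrite Rmin_left in Hx by lra. rewrite Rmax_right in Hx by lra.
    apply continuity_pt_filterlim. apply (ex_derive_continuous (K:=R_AbsRing) (V:=R_NormedModule) f x). apply H; lra.
  - rewrite Rmin_left in Hc by lra. rewrite Rmax_right in Hc by lra.
    assert (0 <= Derive f c) by (apply H; lra).
    assert (0 <= Derive f c * (b - a)) by (apply Rmult_le_pos; lra). lra.
Qed.

Lemma mono_down (f : R -> R) a b : a <= b ->
  (forall t, a <= t <= b -> ex_derive f t /\ Derive f t <= 0) -> f b <= f a.
Proof.
  intros Hab H.
  destruct (MVT_gen f a b (Derive f)) as [c [Hc E]].
  - intros x Hx. rewrite Rmin_left in Hx by lra. rewrite Rmax_right in Hx by lra.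
    apply Derive_correct. apply H; lra.
  - intros x Hx. rewrite Rmin_left in Hx by lra. rewrite Rmax_right in Hx by lra.
    apply continuity_pt_filterlim. apply (ex_derive_continuous (K:=R_AbsRing) (V:=R_NormedModule) f x). apply H; lra.
  - rewrite Rmin_left in Hc by lra. rewrite Rmax_right in Hc by lra.
    assert (Derive f c <= 0) by (apply H; lra).
    assert (0 <= - Derive f c * (b - a)) by (apply Rmult_le_pos; lra). lra.
Qed.

Lemma ratio_ge1 a b : 0 < b -> a / b >= 1 -> a >= b.
Proof.
  intros Hb H. apply Rle_ge. apply Rge_le in H.
  apply Rmult_le_compat_r with (r := b) in H; [|lra].
  unfold Rdiv in H. rewrite Rmult_assoc, Rinv_l, Rmult_1_r, Rmult_1_l in H; lra.
Qed.

Theorem theorem4p2 (err : method) :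
  federating_method err -> modular err ->
  (* (1) *)
  (forall mu sig2, 0 < mu -> 0 < sig2 ->
   forall ns s l, pos_sizes ns -> (s < length ns)%nat -> (l < length ns)%nat ->
     size_of ns s <= size_of ns l ->
     err mu sig2 ns s >= err mu sig2 ns l /\
     (size_of ns s < size_of ns l -> err mu sig2 ns s > err mu sig2 ns l)) /\
  (* (2) *)
  (forall mu sig2, 0 < mu -> 0 < sig2 ->
   forall c, 0 < c ->
   forall ns, pos_sizes ns ->
     (forall i, (i < length ns)%nat -> size_of ns i <= c * (mu / sig2)) ->
     egalitarian_fair err mu sig2 (2 * c + 1) ns) /\
  (* (3) *)
  (forall c eps, 0 < c -> 0 < eps ->
   exists mu sig2 ns nl, 0 < mu /\ 0 < sig2 /\ 1 <= ns /\ ns <= nl /\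
     nl <= c * (mu / sig2) /\
     pair_ratio err mu sig2 ns nl >= 2 * c + 1 - eps).
Proof.
  intros Hfed [Hmod H5].
  split; [|split].
  - intros mu sig2 Hmu Hs ns s l Hp Hsl Hll Hle.
    destruct (Hmod mu sig2 Hmu Hs) as [H1 _].
    destruct (H1 ns s l Hp Hsl Hll Hle) as [Ha Hb].
    split; [|exact Hb].
    apply ratio_ge1; [apply Hfed; auto | exact Ha].
  - intros mu sig2 Hmu Hs c Hc ns Hp Hb i j Hi Hj.
    destruct (Hmod mu sig2 Hmu Hs) as [H1 [H2 [H3 H4]]].
    set (Y := c * (mu / sig2)).
    assert (HY : 0 < Y) by (unfold Y; apply Rmult_lt_0_compat; [lra| apply Rdiv_lt_0_compat; lra]).
    assert (Ei := Hfed mu sig2 ns i Hmu Hs Hp Hi).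
    assert (Ej := Hfed mu sig2 ns j Hmu Hs Hp Hj).
    assert (xi := Hp i Hi). assert (xj := Hp j Hj).
    destruct (Rle_lt_dec (size_of ns i) (size_of ns j)) as [Hij|Hij].
    + eapply Rle_trans. apply (H2 ns i j Hp Hi Hj Hij).
      set (x := size_of ns i) in *. set (y := size_of ns j) in *.
      assert (Hy : y <= Y) by (apply Hb; auto).
      assert (Step1 : pair_ratio err mu sig2 x y <= pair_ratio err mu sig2 x Y).
      { apply (mono_up (fun t => pair_ratio err mu sig2 x t)); [lra|].
        intros t Ht. apply H3; lra. }
      eapply Rle_trans; [exact Step1|].
      apply Rnot_lt_le. intro Hgt.
      set (e := pair_ratio err mu sig2 x Y - (2 * c + 1)).
      assert (He : 0 < e) by (unfold e; lra).
      assert (Ha : 0 < mu / Y) by (apply Rdiv_lt_0_compat; lra).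
      destruct (H5 (mu / Y) sig2 Ha Hs e He) as [d [Hd Hd2]].
      set (x' := Rmin (x / 2) (d * Y / 2)).
      assert (Hx'0 : 0 < x') by (unfold x'; apply Rmin_pos; [lra| apply Rdiv_lt_0_compat; [apply Rmult_lt_0_compat|]; lra]).
      assert (Hx'x : x' <= x) by (unfold x'; pose proof (Rmin_l (x/2) (d*Y/2)); lra).
      assert (Hx'd : x' / Y < d).
      { unfold x'. pose proof (Rmin_r (x/2) (d*Y/2)).
        apply (Rmult_lt_reg_r Y); [lra|]. unfold Rdiv at 1. rewrite Rmult_assoc, Rinv_l by lra. 
        nra. }
      specialize (Hd2 x' Y Hx'0 HY Hx'd).
      assert (EmuY : mu / Y * Y = mu) by (field; lra).
      rewrite EmuY in Hd2.
      assert (Elim : (mu / Y + 2 * sig2) / (mu / Y) = 2 * c + 1).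
      { unfold Y. field. split; lra. }
      rewrite Elim in Hd2.
      assert (Step2 : pair_ratio err mu sig2 x Y <= pair_ratio err mu sig2 x' Y).
      { apply (mono_down (fun t => pair_ratio err mu sig2 t Y)); [lra|].
        intros t Ht. apply H4; lra. }
      apply Rabs_def2 in Hd2. unfold e in *. lra.
    + assert (Hji : size_of ns j <= size_of ns i) by lra.
      destruct (H1 ns j i Hp Hj Hi Hji) as [_ Hs2].
      specialize (Hs2 Hij).
      apply Rle_trans with 1; [|lra].
      apply (Rmult_le_reg_r (err mu sig2 ns j)); [lra|].
      unfold Rdiv. rewrite Rmult_assoc, Rinv_l, Rmult_1_r, Rmult_1_l by lra. lra.
  - intros c eps Hc He.
    assert (Ha : 0 < / c) by (apply Rinv_0_lt_compat; lra).
    destruct (H5 (/ c) 1 Ha Rlt_0_1 eps He) as [d [Hd Hd2]].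
    set (nl := Rmax 1 (2 / d)).
    assert (Hnl1 : 1 <= nl) by apply Rmax_l.
    assert (Hnl2 : 2 / d <= nl) by apply Rmax_r.
    assert (Hlt : 1 / nl < d).
    { apply (Rmult_lt_reg_r nl); [lra|]. unfold Rdiv at 1.
      rewrite Rmult_assoc, Rinv_l, Rmult_1_r by lra.
      apply (Rmult_le_compat_l d) in Hnl2; [|lra].
      assert (d * (2 / d) = 2) by (field; lra). nra. }
    specialize (Hd2 1 nl Rlt_0_1 ltac:(lra) Hlt).
    exists (/ c * nl), 1, 1, nl.
    repeat split; try lra.
    + apply Rmult_lt_0_compat; lra.
    + right. field. lra.
    + assert (E : (/ c * nl / nl + 2 * 1) / (/ c * nl / nl) = 2 * c + 1) by (field; lra).
      rewrite E in Hd2. apply Rabs_def2 in Hd2. lra.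
Qed.
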